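(* Let $\sigma\subseteq N_\mathbb{Q}$ be a strongly convex rational polyhedral cone, $\tau$ a $k$-dimensional regular face of $\sigma$ with primitive ray generators $p_1,\ldots,p_k$, and let $c_1,\ldots,c_k\in\tau^\perp\cap M$ be arbitrary. Then there is a set of Demazure roots $\{e_1^{(r)},e_2^{(r)}\mid r=1,\ldots,k\}$ of $\sigma$ compatible with $\tau$ such that $e_1^{(r)}-e_2^{(r)}=c_r$ for all $r=1,\ldots,k$.
   Context: $N$ is a lattice, $M$ its dual, $\langle\cdot,\cdot\rangle$ the pairing. A face is regular if its primitive ray generators are part of a basis of $N$. If $p_1,\ldots,p_m$ are the primitive vectors on the rays of $\sigma$, a Demazure root associated with $p_i$ is an $e\in M$ with $\langle p_i,e\rangle=-1$ and $\langle p_j,e\rangle\ge0$ for all $j\ne i$. A set $\{e_1^{(r)},e_2^{(r)}\}_{r=1}^k$ of Demazure roots of $\sigma$ is compatible with $\tau$ if $\langle p_s,e_1^{(r)}\rangle=\langle p_s,e_2^{(r)}\rangle=-\delta_{rs}$ for all $r,s=1,\ldots,k$. *)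

(* Defs.v *)
From HB Require Import structures.
From mathcomp Require Import all_boot all_order all_algebra.
Set Implicit Arguments. Unset Strict Implicit. Unset Printing Implicit Defensive.
Import Order.TTheory GRing.Theory Num.Theory.
Local Open Scope ring_scope.

(* N = Z^n (row vectors 'rV[int]_n), M = its dual, also identified with
   'rV[int]_n via the standard pairing. N_Q = Q^n. *)

Definition pair (n : nat) (v u : 'rV[int]_n) : int := \sum_(i < n) v 0 i * u 0 i.

Definition toQ (n : nat) (v : 'rV[int]_n) : 'rV[rat]_n := map_mx intr v.

Definition primitive (n : nat) (v : 'rV[int]_n) : Prop :=
  v != 0 /\ forall (d : int) (w : 'rV[int]_n), v = d *: w -> d = 1 \/ d = -1.

(* p_1,...,p_m are exactly the primitive ray generators of the strongly convex
   rational polyhedral cone sigma = cone_Q(p_1,...,p_m) :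
   - each p_i is primitive, the p_i are pairwise distinct,
   - no p_i lies in the (rational) cone generated by the others (each spans
     an extremal ray),
   - strong convexity: sigma ∩ (-sigma) = {0}, i.e. a nonnegative rational
     combination of the p_i vanishes only trivially. *)
Definition ray_generators (n m : nat) (p : 'I_m -> 'rV[int]_n) : Prop :=
  [/\ forall i, primitive (p i),
      injective p,
      (forall i (l : 'I_m -> rat), (forall j, 0 <= l j) ->
          toQ (p i) <> \sum_(j < m | j != i) l j *: toQ (p j))
    & (forall l : 'I_m -> rat, (forall j, 0 <= l j) ->
          \sum_(j < m) l j *: toQ (p j) = 0 -> forall j, l j = 0)].

(* t : 'I_k -> 'I_m lists the rays of a face tau of sigma:
   tau = sigma ∩ u^perp for some u in sigma^vee ∩ M, and the rays of sigma
   lying in tau are exactly p_(t 1), ..., p_(t k). *)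
Definition is_face (n m k : nat) (p : 'I_m -> 'rV[int]_n) (t : 'I_k -> 'I_m) : Prop :=
  injective t /\
  exists u : 'rV[int]_n,
    (forall j, 0 <= pair (p j) u) /\
    (forall j, pair (p j) u = 0 <-> exists r, t r = j).

(* The face is regular: its primitive ray generators are part of a basis of N
   (a basis of N = rows of an integer matrix invertible over Z). *)
Definition regular_face (n m k : nat) (p : 'I_m -> 'rV[int]_n) (t : 'I_k -> 'I_m) : Prop :=
  exists (B : 'M[int]_n) (f : 'I_k -> 'I_n),
    B \in unitmx /\ injective f /\ forall r, row (f r) B = p (t r).

Definition demazure_root_at (n m : nat) (p : 'I_m -> 'rV[int]_n) (i : 'I_m)
    (e : 'rV[int]_n) : Prop :=
  pair (p i) e = -1 /\ forall j, j != i -> 0 <= pair (p j) e.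

Definition demazure_root (n m : nat) (p : 'I_m -> 'rV[int]_n) (e : 'rV[int]_n) : Prop :=
  exists i, demazure_root_at p i e.

Definition compatible (n m k : nat) (p : 'I_m -> 'rV[int]_n) (t : 'I_k -> 'I_m)
    (e1 e2 : 'I_k -> 'rV[int]_n) : Prop :=
  forall r s : 'I_k,
    pair (p (t s)) (e1 r) = - ((r == s)%:R) /\ pair (p (t s)) (e2 r) = - ((r == s)%:R).

(* Main.v *)
Require Import Defs.
From HB Require Import structures.
From mathcomp Require Import all_boot all_order all_algebra.
From mathcomp Require Import zify.
Import Order.TTheory GRing.Theory Num.Theory.
Local Open Scope ring_scope.

Lemma pairD n (v a b : 'rV[int]_n) : pair v (a + b) = pair v a + pair v b.
Proof. by rewrite /pair -big_split; apply: eq_bigr => i _; rewrite mxE mulrDr. Qed.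

Lemma pairN n (v a : 'rV[int]_n) : pair v (- a) = - pair v a.
Proof. by rewrite /pair -sumrN; apply: eq_bigr => i _; rewrite mxE mulrN. Qed.

Lemma pairZ n (v a : 'rV[int]_n) x : pair v (x *: a) = x * pair v a.
Proof. by rewrite /pair mulr_sumr; apply: eq_bigr => i _; rewrite mxE mulrCA. Qed.

Theorem mainTheorem4 (n m k : nat) (p : 'I_m -> 'rV[int]_n) (t : 'I_k -> 'I_m)
  (Hsigma : ray_generators p) (Hface : is_face p t) (Hreg : regular_face p t)
  (c : 'I_k -> 'rV[int]_n) (Hc : forall r s : 'I_k, pair (p (t s)) (c r) = 0) :
  exists e1 e2 : 'I_k -> 'rV[int]_n,
    [/\ forall r, demazure_root p (e1 r) /\ demazure_root p (e2 r),
        compatible p t e1 e2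
      & forall r, e1 r - e2 r = c r].
Proof.
move: Hface => [tinj [u [Hu0 Hu]]].
move: Hreg => [B [f [BU [finj Hrow]]]].
pose d := fun r => \row_i (invmx B) i (f r).
have pd : forall r s, pair (p (t s)) (d r) = (s == r)%:R.
  move=> r s; rewrite -Hrow /pair.
  transitivity ((B *m invmx B) (f s) (f r)).
    by rewrite mxE; apply: eq_bigr => i _; rewrite !mxE.
  by rewrite mulmxV // mxE (inj_eq finj).
pose N := fun r => \sum_j (`|pair (p j) (d r)| + `|pair (p j) (c r)|).
have NB : forall r j, `|pair (p j) (d r)| + `|pair (p j) (c r)| <= N r.
  move=> r j; rewrite /N (bigD1 j) //= lerDl; apply: sumr_ge0 => i _.
  by rewrite addr_ge0.
have pu : forall s, pair (p (t s)) u = 0 by move=> s; apply/Hu; exists s.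
exists (fun r => - d r + N r *: u), (fun r => - d r + N r *: u - c r).
have E1 : forall r j, pair (p j) (- d r + N r *: u) = - pair (p j) (d r) + N r * pair (p j) u.
  by move=> r j; rewrite pairD pairN pairZ.
have E2 : forall r j, pair (p j) (- d r + N r *: u - c r) =
    - pair (p j) (d r) + N r * pair (p j) u - pair (p j) (c r).
  by move=> r j; rewrite pairD pairN E1.
have outside : forall r j, pair (p j) u != 0 ->
    0 <= - pair (p j) (d r) + N r * pair (p j) u - pair (p j) (c r) /\
    0 <= - pair (p j) (d r) + N r * pair (p j) u.
  move=> r j nz.
  have x1 : 1 <= pair (p j) u by rewrite -gtz0_ge1 lt_def nz Hu0.
  have := NB r j; have := ler_norm (pair (p j) (d r)); have := ler_norm (pair (p j) (c r)).
  have N0 : 0 <= N r by rewrite /N; apply: sumr_ge0 => i _; rewrite addr_ge0.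
  have hN : N r <= N r * pair (p j) u by rewrite ler_peMr.
  move=> *; split; nia.
split.
- move=> r; split; exists (t r); split.
  + by rewrite E1 pd pu eqxx mulr0 addr0.
  + move=> j jn; have [/Hu [s ts]|nz] := eqVneq (pair (p j) u) 0.
      rewrite -ts E1 pd pu mulr0 addr0.
      have -> : (s == r) = false by apply/negbTE; apply: contraNneq jn => sr; rewrite -ts sr.
      by rewrite oppr0.
    by rewrite E1; case: (outside r j nz).
  + by rewrite E2 pd pu Hc eqxx mulr0 addr0 subr0.
  + move=> j jn; have [/Hu [s ts]|nz] := eqVneq (pair (p j) u) 0.
      rewrite -ts E2 pd pu Hc mulr0 addr0 subr0.
      have -> : (s == r) = false by apply/negbTE; apply: contraNneq jn => sr; rewrite -ts sr.
      by rewrite oppr0.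
    by rewrite E2; case: (outside r j nz).
- move=> r s; rewrite E1 E2 pd pu Hc mulr0 addr0 subr0 eq_sym; by split.
- by move=> r; rewrite opprB addrC subrK.
Qed.
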